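(* Let $\theta\in(-\pi/2,\pi/2)$. For $t\not\equiv u\pmod{2\pi}$ let $L^*_\theta(t)$ be the image of $L(t)$ under the clockwise rotation by $\theta$ about $P(t)$, and let $\Delta^*_\theta$ be the envelope of the family $\{L^*_\theta(t)\}$. Then the envelope point of $L^*_\theta(t)$ is $$\Delta^*_\theta(t)=M+\cos\theta\; R_{-\theta}\big(\Delta_u(t)-M\big),$$ where $R_{-\theta}$ is the clockwise rotation about the origin by angle $\theta$. Thus $\Delta^*_\theta$ is the image of $\Delta_u$ under the similarity composed of a rotation about $M$ by $\theta$ (clockwise) and the homothety with center $M$ and factor $\cos\theta$; in particular the region bounded by $\Delta^*_\theta$ has area $\dfrac{\pi c^4\cos^2\theta}{2ab}$, independent of $u$.
   Context: Let $a>b>0$ and $c>0$ with $c^2=a^2-b^2$. Let $\mathcal{E}$ be the ellipse $x^2/a^2+y^2/b^2=1$, parametrized by $P(t)=(a\cos t,b\sin t)$. Fix $u\in\mathbb{R}$ and let $M=(a\cos u,b\sin u)$. For $t\not\equiv u$, $L(t)$ is the line through $P(t)$ perpendicular to $P(t)-M$. Let $\Delta_u(t)=(x_u(t),y_u(t))$, where $x_u(t)=\frac1a\big(c^2(1+\cos(t+u))\cos t-a^2\cos u\big)$ and $y_u(t)=\frac1b\big(c^2\cos t\sin(t+u)-c^2\sin t-a^2\sin u\big)$; $\Delta_u(t)$ is the envelope point of $L(t)$ (the negative pedal curve of $\mathcal{E}$ with respect to $M$). The envelope point of a smooth one-parameter family of lines $\{\ell(t)\}$ is the point of $\ell(t)$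 satisfying both $\ell(t)$'s equation and its $t$-derivative. *)

(* Defs.v *)
From Stdlib Require Import Reals.
From Coquelicot Require Import Coquelicot.
Open Scope R_scope.

Definition pt := (R * R)%type.
Definition padd (v w : pt) : pt := (fst v + fst w, snd v + snd w).
Definition psub (v w : pt) : pt := (fst v - fst w, snd v - snd w).
Definition pscal (k : R) (v : pt) : pt := (k * fst v, k * snd v).
Definition pdot (v w : pt) : R := fst v * fst w + snd v * snd w.

Definition rot_cw (theta : R) (v : pt) : pt :=
  (fst v * cos theta + snd v * sin theta, - fst v * sin theta + snd v * cos theta).

Definition rot_cw_about (theta : R) (C X : pt) : pt := padd C (rot_cw theta (psub X C)).

Definition Pe (a b t : R) : pt := (a * cos t, b * sin t).

Definition Lline (a b u t : R) (X : pt) : Prop :=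
  pdot (psub X (Pe a b t)) (psub (Pe a b t) (Pe a b u)) = 0.

Definition image_set (f : pt -> pt) (S : pt -> Prop) (Y : pt) : Prop :=
  exists X, S X /\ Y = f X.

Definition Lstar (a b u theta t : R) : pt -> Prop :=
  image_set (rot_cw_about theta (Pe a b t)) (Lline a b u t).

Definition is_envelope_point (F : R -> pt -> R) (t : R) (X : pt) : Prop :=
  F t X = 0 /\ is_derive (fun s => F s X) t 0.

(* Delta_u(t), the negative pedal curve of the ellipse w.r.t. M = P(u) *)
Definition Delta_u (a b c u t : R) : pt :=
  ( / a * (c ^ 2 * (1 + cos (t + u)) * cos t - a ^ 2 * cos u),
    / b * (c ^ 2 * cos t * sin (t + u) - c ^ 2 * sin t - a ^ 2 * sin u) ).

Definition signed_area (g : R -> pt) (t0 t1 : R) : R :=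
  / 2 * RInt (fun t => fst (g t) * Derive (fun s => snd (g s)) t
                      - snd (g t) * Derive (fun s => fst (g s)) t) t0 t1.

(* Main.v *)
Require Import Defs.
From Stdlib Require Import Reals ZArith Lra.
From Coquelicot Require Import Coquelicot.
Open Scope R_scope.

Definition DSX (a b ct st cu su ch sh : R) : R :=
  (- b*su*ch*sh + b^2*(/b)*st*ch*sh - b^2*(/b)*ct*st*cu*ch*sh - b^2*(/b)*ct^2*su*ch*sh - b^2*(/a)*ct*ch^2 + b^2*(/a)*ct*st*su*ch^2 - b^2*(/a)*ct^2*cu*ch^2 + a*cu - a*cu*ch^2 - a^2*(/b)*su*ch*sh - a^2*(/b)*st*ch*sh + a^2*(/b)*ct*st*cu*ch*sh + a^2*(/b)*ct^2*su*ch*sh - a^2*(/a)*cu*ch^2 + a^2*(/a)*ct*ch^2 - a^2*(/a)*ct*st*su*ch^2 + a^2*(/a)*ct^2*cu*ch^2).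

Definition DSY (a b ct st cu su ch sh : R) : R :=
  (b*su - b*su*ch^2 + b^2*(/b)*st*ch^2 - b^2*(/b)*ct*st*cu*ch^2 - b^2*(/b)*ct^2*su*ch^2 + b^2*(/a)*ct*ch*sh - b^2*(/a)*ct*st*su*ch*sh + b^2*(/a)*ct^2*cu*ch*sh + a*cu*ch*sh - a^2*(/b)*su*ch^2 - a^2*(/b)*st*ch^2 + a^2*(/b)*ct*st*cu*ch^2 + a^2*(/b)*ct^2*su*ch^2 + a^2*(/a)*cu*ch*sh - a^2*(/a)*ct*ch*sh + a^2*(/a)*ct*st*su*ch*sh - a^2*(/a)*ct^2*cu*ch*sh).

Definition DSXd (a b ct st cu su ch sh : R) : R :=
  (b^2*(/b)*st^2*cu*ch*sh + b^2*(/b)*ct*ch*sh + 2*b^2*(/b)*ct*st*su*ch*sh - b^2*(/b)*ct^2*cu*ch*sh + b^2*(/a)*st*ch^2 - b^2*(/a)*st^2*su*ch^2 + 2*b^2*(/a)*ct*st*cu*ch^2 + b^2*(/a)*ct^2*su*ch^2 - a^2*(/b)*st^2*cu*ch*sh - a^2*(/b)*ct*ch*sh - 2*a^2*(/b)*ct*st*su*ch*sh + a^2*(/b)*ct^2*cu*ch*sh - a^2*(/a)*st*ch^2 + a^2*(/a)*st^2*su*ch^2 - 2*a^2*(/a)*ct*st*cu*ch^2 - a^2*(/a)*ct^2*su*ch^2).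

Definition DSYd (a b ct st cu su ch sh : R) : R :=
  (b^2*(/b)*st^2*cu*ch^2 + b^2*(/b)*ct*ch^2 + 2*b^2*(/b)*ct*st*su*ch^2 - b^2*(/b)*ct^2*cu*ch^2 - b^2*(/a)*st*ch*sh + b^2*(/a)*st^2*su*ch*sh - 2*b^2*(/a)*ct*st*cu*ch*sh - b^2*(/a)*ct^2*su*ch*sh - a^2*(/b)*st^2*cu*ch^2 - a^2*(/b)*ct*ch^2 - 2*a^2*(/b)*ct*st*su*ch^2 + a^2*(/b)*ct^2*cu*ch^2 + a^2*(/a)*st*ch*sh - a^2*(/a)*st^2*su*ch*sh + 2*a^2*(/a)*ct*st*cu*ch*sh + a^2*(/a)*ct^2*su*ch*sh).

Definition Gp (a b ct st cu su ch sh : R) : R :=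
  (- (1/2)*b^2*ch*sh - b^2*st*su*ch*sh + b^2*ct*cu*ch*sh + b^2*ct^2*ch*sh - (2/3)*b^3*(/a)*st*cu*ch^2 - b^3*(/a)*ct*su*ch^2 + (1/2)*b^3*(/a)*ct*st*ch^2 + (2/3)*b^3*(/a)*ct^2*st*cu*ch^2 + (2/3)*b^3*(/a)*ct^3*su*ch^2 + (1/3)*a*b*st*cu*ch^2 + a*b*ct*su*ch^2 - (4/3)*a*b*ct^2*st*cu*ch^2 - (4/3)*a*b*ct^3*su*ch^2 + (1/2)*a^2*ch*sh + a^2*st*su*ch*sh - a^2*ct*cu*ch*sh - a^2*ct^2*ch*sh + (1/3)*a^3*(/b)*st*cu*ch^2 - (1/2)*a^3*(/b)*ct*st*ch^2 + (2/3)*a^3*(/b)*ct^2*st*cu*ch^2 + (2/3)*a^3*(/b)*ct^3*su*ch^2).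

Definition Gd (a b ct st cu su ch sh : R) : R :=
  (- b^2*st*cu*ch*sh - b^2*ct*su*ch*sh - 2*b^2*ct*st*ch*sh + b^3*(/a)*st*su*ch^2 - (1/2)*b^3*(/a)*st^2*ch^2 - (2/3)*b^3*(/a)*ct*cu*ch^2 - (4/3)*b^3*(/a)*ct*st^2*cu*ch^2 + (1/2)*b^3*(/a)*ct^2*ch^2 - 2*b^3*(/a)*ct^2*st*su*ch^2 + (2/3)*b^3*(/a)*ct^3*cu*ch^2 - a*b*st*su*ch^2 + (1/3)*a*b*ct*cu*ch^2 + (8/3)*a*b*ct*st^2*cu*ch^2 + 4*a*b*ct^2*st*su*ch^2 - (4/3)*a*b*ct^3*cu*ch^2 + a^2*st*cu*ch*sh + a^2*ct*su*ch*sh + 2*a^2*ct*st*ch*sh + (1/2)*a^3*(/b)*st^2*ch^2 + (1/3)*a^3*(/b)*ct*cu*ch^2 - (4/3)*a^3*(/b)*ct*st^2*cu*ch^2 - (1/2)*a^3*(/b)*ct^2*ch^2 - 2*a^3*(/b)*ct^2*st*su*ch^2 + (2/3)*a^3*(/b)*ct^3*cu*ch^2).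

Definition Kc (a b ct st cu su ch sh : R) : R :=
  (- (1/2)*b^3*(/a)*ch^2 + a*b*ch^2 - (1/2)*a^3*(/b)*ch^2).

Lemma LF (a b ct st cu su th : R) : a <> 0 -> b <> 0 ->
  st^2+ct^2 = 1 -> su^2+cu^2 = 1 -> sin th^2 + cos th^2 = 1 ->
  pdot (psub (DSX a b ct st cu su (cos th) (sin th), DSY a b ct st cu su (cos th) (sin th)) (a*ct, b*st))
       (rot_cw th (psub (a*ct, b*st) (a*cu, b*su))) = 0.
Proof.
  intros Ha Hb Ht Hu Hh. unfold pdot, psub, rot_cw; simpl.
  set (ch := cos th) in *; set (sh := sin th) in *.
  assert (gt : st^2+ct^2-1 = 0) by lra. assert (gu : su^2+cu^2-1 = 0) by lra.
  assert (gh : sh^2+ch^2-1 = 0) by lra.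
  match goal with |- ?L = 0 => assert (E : L - 0 = (- b^2*ch + b^3*(/b)*ch*sh^2 + b^3*(/b)*ch^3 - b^3*(/b)*ct*cu*ch*sh^2 - b^3*(/b)*ct*cu*ch^3 - a^2*b*(/b)*ch*sh^2 - a^2*b*(/b)*ch^3 + a^2*b*(/b)*ct*cu*ch*sh^2 + a^2*b*(/b)*ct*cu*ch^3)*(st^2+ct^2-1) + (- b^2*ch + b^2*ch*sh^2 + b^2*ch^3 + b^3*(/b)*ct^2*ch*sh^2 + b^3*(/b)*ct^2*ch^3 + a^2*b*(/b)*ch*sh^2 + a^2*b*(/b)*ch^3 - a^2*b*(/b)*ct^2*ch*sh^2 - a^2*b*(/b)*ct^2*ch^3)*(su^2+cu^2-1) + (b^2*ch - b^2*cu^2*ch - b^2*st*su*ch + b^3*(/b)*ch - b^3*(/b)*st*su*ch - b^3*(/b)*ct*cu*ch + b^3*(/b)*ct*st*cu*su*ch - b^3*(/b)*ct^2*cu^2*ch - b^3*(/b)*ct^2*st*su*ch + b^3*(/b)*ct^3*cu*ch + a*b^2*(/a)*ct*cu*ch - a*b^2*(/a)*ct*st*cu*su*ch - a*b^2*(/a)*ct^2*ch + a*b^2*(/a)*ct^2*cu^2*ch + a*b^2*(/a)*ct^2*st*su*ch - a*b^2*(/a)*ct^3*cu*ch + a^2*cu^2*ch - a^2*ct*cu*ch - a^2*b*(/b)*cu^2*ch + a^2*b*(/b)*ct*cu*ch - a^2*b*(/b)*ct*st*cu*su*ch + a^2*b*(/b)*ct^2*cu^2*ch + a^2*b*(/b)*ct^2*st*su*ch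 - a^2*b*(/b)*ct^3*cu*ch + a^3*(/a)*cu^2*ch - 2*a^3*(/a)*ct*cu*ch + a^3*(/a)*ct*st*cu*su*ch + a^3*(/a)*ct^2*ch - a^3*(/a)*ct^2*cu^2*ch - a^3*(/a)*ct^2*st*su*ch + a^3*(/a)*ct^3*cu*ch)*(sh^2+ch^2-1)) end.
  { unfold DSX, DSY. field. split; assumption. }
  rewrite gt, gu, gh in E. lra.
Qed.

Definition dFe (a b ct st cu su ch sh X1 X2 : R) : R :=
  - (- a * st) * ((a*ct - a*cu)*ch + (b*st - b*su)*sh)
  - (b * ct) * (- (a*ct - a*cu)*sh + (b*st - b*su)*ch)
  + (X1 - a*ct) * ((- a * st) * ch + (b*ct) * sh)
  + (X2 - b*st) * (- (- a * st) * sh + (b*ct) * ch).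

Lemma LdF (a b ct st cu su ch sh : R) : a <> 0 -> b <> 0 ->
  st^2+ct^2 = 1 -> su^2+cu^2 = 1 -> sh^2 + ch^2 = 1 ->
  dFe a b ct st cu su ch sh (DSX a b ct st cu su ch sh) (DSY a b ct st cu su ch sh) = 0.
Proof.
  intros Ha Hb Ht Hu Hh.
  assert (gt : st^2+ct^2-1 = 0) by lra. assert (gu : su^2+cu^2-1 = 0) by lra.
  assert (gh : sh^2+ch^2-1 = 0) by lra.
  match goal with |- ?L = 0 => assert (E : L - 0 = (- a*b^2*(/a)*ct*su*ch*sh^2 - a*b^2*(/a)*ct*su*ch^3 + a^3*(/a)*ct*su*ch*sh^2 + a^3*(/a)*ct*su*ch^3)*(st^2+ct^2-1) + 0*(su^2+cu^2-1) + (- b^2*ct*su*ch + b^3*(/b)*ct*st*ch - b^3*(/b)*ct^2*st*cu*ch - b^3*(/b)*ct^3*su*ch - a*b^2*(/a)*ct*su*ch + a*b^2*(/a)*ct*st*ch + a*b^2*(/a)*ct^2*st*cu*ch + a*b^2*(/a)*ct^3*su*ch + a^2*st*cu*ch - a^2*b*(/b)*ct*su*ch - a^2*b*(/b)*ct*st*ch + a^2*b*(/b)*ct^2*st*cu*ch + a^2*b*(/b)*ct^3*su*ch + a^3*(/a)*st*cu*ch + a^3*(/a)*ct*su*ch - a^3*(/a)*ct*st*ch - a^3*(/a)*ct^2*st*cu*ch - a^3*(/a)*ct^3*su*ch)*(sh^2+ch^2-1)) end.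
  { unfold dFe, DSX, DSY. field. split; assumption. }
  rewrite gt, gu, gh in E. lra.
Qed.

Lemma LI (a b ct st cu su ch sh : R) : a <> 0 -> b <> 0 ->
  st^2+ct^2 = 1 -> su^2+cu^2 = 1 -> sh^2 + ch^2 = 1 ->
  DSX a b ct st cu su ch sh * DSYd a b ct st cu su ch sh - DSY a b ct st cu su ch sh * DSXd a b ct st cu su ch sh
  = Kc a b ct st cu su ch sh + Gd a b ct st cu su ch sh.
Proof.
  intros Ha Hb Ht Hu Hh.
  assert (gt : st^2+ct^2-1 = 0) by lra. assert (gu : su^2+cu^2-1 = 0) by lra.
  assert (gh : sh^2+ch^2-1 = 0) by lra.
  match goal with |- ?L = ?R => assert (E : L - R = (- b^3*(/b)*cu*su*ch*sh + (1/2)*b^3*(/a)*ch^2 + b^3*(/a)*su^2*ch^2 - b^3*(/a)*su^2*ch^2*sh^2 - b^3*(/a)*su^2*ch^4 + (4/3)*b^3*(/a)*ct*cu*ch^2 - b^4*(/a)*(/b)*ch^2*sh^2 - b^4*(/a)*(/b)*ch^4 + b^4*(/a)*(/b)*st*su*ch^2*sh^2 + b^4*(/a)*(/b)*st*su*ch^4 - 2*b^4*(/a)*(/b)*ct*cu*ch^2*sh^2 - 2*b^4*(/a)*(/b)*ct*cu*ch^4 + b^4*(/a)*(/b)*ct^2*su^2*ch^2*sh^2 + b^4*(/a)*(/b)*ct^2*su^2*ch^4 + b^4*(/a)*(/b)*ct^2*cu^2*ch^2*sh^2 + b^4*(/a)*(/b)*ct^2*cu^2*ch^4 - (8/3)*a*b*ct*cu*ch^2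 + a*b^2*(/b)*cu^2*ch^2 - a*b^2*(/b)*cu^2*ch^2*sh^2 - a*b^2*(/b)*cu^2*ch^4 + a*b^2*(/a)*cu*su*ch*sh + a^2*b*(/b)*cu*su*ch*sh - a^2*b*(/a)*su^2*ch^2 + a^2*b*(/a)*su^2*ch^2*sh^2 + a^2*b*(/a)*su^2*ch^4 + 2*a^2*b^2*(/a)*(/b)*ch^2*sh^2 + 2*a^2*b^2*(/a)*(/b)*ch^4 - a^2*b^2*(/a)*(/b)*su^2*ch^2*sh^2 - a^2*b^2*(/a)*(/b)*su^2*ch^4 - a^2*b^2*(/a)*(/b)*cu^2*ch^2*sh^2 - a^2*b^2*(/a)*(/b)*cu^2*ch^4 - 2*a^2*b^2*(/a)*(/b)*st*su*ch^2*sh^2 - 2*a^2*b^2*(/a)*(/b)*st*su*ch^4 + 4*a^2*b^2*(/a)*(/b)*ct*cu*ch^2*sh^2 + 4*a^2*b^2*(/a)*(/b)*ct*cu*ch^4 - 2*a^2*b^2*(/a)*(/b)*ct^2*su^2*ch^2*sh^2 - 2*a^2*b^2*(/a)*(/b)*ct^2*su^2*ch^4 - 2*a^2*b^2*(/a)*(/b)*ct^2*cu^2*ch^2*sh^2 - 2*a^2*b^2*(/a)*(/b)*ct^2*cu^2*ch^4 - (1/2)*a^3*(/b)*ch^2 - a^3*(/b)*cu^2*ch^2 + a^3*(/b)*cu^2*ch^2*sh^2 + a^3*(/b)*cu^2*ch^4 + (4/3)*a^3*(/b)*ct*cu*ch^2 - a^3*(/a)*cu*su*ch*sh - a^4*(/a)*(/b)*ch^2*sh^2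 - a^4*(/a)*(/b)*ch^4 + a^4*(/a)*(/b)*su^2*ch^2*sh^2 + a^4*(/a)*(/b)*su^2*ch^4 + a^4*(/a)*(/b)*cu^2*ch^2*sh^2 + a^4*(/a)*(/b)*cu^2*ch^4 + a^4*(/a)*(/b)*st*su*ch^2*sh^2 + a^4*(/a)*(/b)*st*su*ch^4 - 2*a^4*(/a)*(/b)*ct*cu*ch^2*sh^2 - 2*a^4*(/a)*(/b)*ct*cu*ch^4 + a^4*(/a)*(/b)*ct^2*su^2*ch^2*sh^2 + a^4*(/a)*(/b)*ct^2*su^2*ch^4 + a^4*(/a)*(/b)*ct^2*cu^2*ch^2*sh^2 + a^4*(/a)*(/b)*ct^2*cu^2*ch^4)*(st^2+ct^2-1) + (- 2*b^3*(/b)*ct*st*ch*sh + b^3*(/a)*ch^2 - b^3*(/a)*ch^2*sh^2 - b^3*(/a)*ch^4 - 2*b^3*(/a)*ct^2*ch^2 + 2*b^3*(/a)*ct^2*ch^2*sh^2 + 2*b^3*(/a)*ct^2*ch^4 + b^4*(/a)*(/b)*ct^2*ch^2*sh^2 + b^4*(/a)*(/b)*ct^2*ch^4 + 2*a^2*b*(/b)*ct*st*ch*sh - a^2*b*(/a)*ch^2 + a^2*b*(/a)*ch^2*sh^2 + a^2*b*(/a)*ch^4 + 2*a^2*b*(/a)*ct^2*ch^2 - 2*a^2*b*(/a)*ct^2*ch^2*sh^2 - 2*a^2*b*(/a)*ct^2*ch^4 - a^2*b^2*(/a)*(/b)*ch^2*sh^2 - a^2*b^2*(/a)*(/b)*ch^4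 + a^4*(/a)*(/b)*ch^2*sh^2 + a^4*(/a)*(/b)*ch^4 - a^4*(/a)*(/b)*ct^2*ch^2*sh^2 - a^4*(/a)*(/b)*ct^2*ch^4)*(su^2+cu^2-1) + (- b^3*(/a)*ch^2 + b^3*(/a)*cu^2*ch^2 + b^3*(/a)*st*su*ch^2 + 2*b^3*(/a)*ct*st*cu*su*ch^2 + 2*b^3*(/a)*ct^2*ch^2 - 2*b^3*(/a)*ct^2*cu^2*ch^2 - b^4*(/a)*(/b)*ch^2 + b^4*(/a)*(/b)*st*su*ch^2 - 2*b^4*(/a)*(/b)*ct*cu*ch^2 + b^4*(/a)*(/b)*ct^2*ch^2 - 2*b^4*(/a)*(/b)*ct^2*st*su*ch^2 + 2*b^4*(/a)*(/b)*ct^3*cu*ch^2 - a*b^2*(/b)*cu^2*ch^2 - a*b^2*(/b)*ct*cu*ch^2 - 2*a*b^2*(/b)*ct*st*cu*su*ch^2 + 2*a*b^2*(/b)*ct^2*cu^2*ch^2 + a^2*b*(/a)*ch^2 - a^2*b*(/a)*cu^2*ch^2 - a^2*b*(/a)*st*su*ch^2 - 2*a^2*b*(/a)*ct*st*cu*su*ch^2 - 2*a^2*b*(/a)*ct^2*ch^2 + 2*a^2*b*(/a)*ct^2*cu^2*ch^2 + a^2*b^2*(/a)*(/b)*ch^2 - a^2*b^2*(/a)*(/b)*st*su*ch^2 + 3*a^2*b^2*(/a)*(/b)*ct*cu*ch^2 + 4*a^2*b^2*(/a)*(/b)*ct^2*st*su*ch^2 - 4*a^2*b^2*(/a)*(/b)*ct^3*cu*ch^2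 + a^3*(/b)*cu^2*ch^2 + a^3*(/b)*ct*cu*ch^2 + 2*a^3*(/b)*ct*st*cu*su*ch^2 - 2*a^3*(/b)*ct^2*cu^2*ch^2 - a^4*(/a)*(/b)*ct*cu*ch^2 - a^4*(/a)*(/b)*ct^2*ch^2 - 2*a^4*(/a)*(/b)*ct^2*st*su*ch^2 + 2*a^4*(/a)*(/b)*ct^3*cu*ch^2)*(sh^2+ch^2-1)) end.
  { unfold DSX, DSY, DSXd, DSYd, Kc, Gd. field. split; assumption. }
  rewrite gt, gu, gh in E. lra.
Qed.

Lemma LK (a b ct st cu su ch sh : R) : a <> 0 -> b <> 0 ->
  Kc a b ct st cu su ch sh = - ch^2 * (a^2-b^2)^2 / (2*a*b).
Proof. intros. unfold Kc. field. split; assumption. Qed.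

Lemma cos_eq1 (x : R) : cos x = 1 -> exists k : Z, x = 2 * IZR k * PI.
Proof.
  intro H. replace x with (2 * (x/2)) in H by field.
  rewrite cos_2a_sin in H.
  assert (sin (x/2) = 0) by nra.
  destruct (sin_eq_0_0 _ H0) as [k Hk]. exists k. lra.
Qed.

Lemma lin2 (x1 x2 d1 d2 p1 p2 n1 n2 m1 m2 k1 : R) : n1*m2 - n2*m1 <> 0 ->
  (x1-p1)*n1 + (x2-p2)*n2 = 0 -> (d1-p1)*n1+(d2-p2)*n2 = 0 ->
  k1 + x1*m1 + x2*m2 = 0 -> k1 + d1*m1 + d2*m2 = 0 -> x1 = d1 /\ x2 = d2.
Proof.
  intros Hd E1 E2 E3 E4.
  assert (A1 : (x1 - d1) * (n1*m2 - n2*m1) = 0).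
  { replace ((x1 - d1) * (n1*m2 - n2*m1)) with
      (m2*((x1-p1)*n1 + (x2-p2)*n2 - ((d1-p1)*n1+(d2-p2)*n2)) - n2*(k1 + x1*m1 + x2*m2 - (k1 + d1*m1 + d2*m2))) by ring.
    rewrite E1, E2, E3, E4. ring. }
  assert (A2 : (x2 - d2) * (n1*m2 - n2*m1) = 0).
  { replace ((x2 - d2) * (n1*m2 - n2*m1)) with
      (- m1*((x1-p1)*n1 + (x2-p2)*n2 - ((d1-p1)*n1+(d2-p2)*n2)) + n1*(k1 + x1*m1 + x2*m2 - (k1 + d1*m1 + d2*m2))) by ring.
    rewrite E1, E2, E3, E4. ring. }
  apply Rmult_integral in A1; apply Rmult_integral in A2.
  destruct A1 as [A1|A1]; [|contradiction]; destruct A2 as [A2|A2]; [|contradiction]. lra.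
Qed.

Lemma dFe_lin a b ct st cu su ch sh X1 X2 :
  dFe a b ct st cu su ch sh X1 X2 = dFe a b ct st cu su ch sh 0 0
    + X1 * ((- a * st) * ch + (b*ct) * sh) + X2 * (- (- a * st) * sh + (b*ct) * ch).
Proof. unfold dFe. ring. Qed.

Theorem proposition9p1 (a b c u theta : R) :
  0 < b -> b < a -> 0 < c -> c ^ 2 = a ^ 2 - b ^ 2 ->
  - (PI / 2) < theta < PI / 2 ->
  let M := Pe a b u in
  let F := fun (t : R) (X : pt) =>
             pdot (psub X (Pe a b t)) (rot_cw theta (psub (Pe a b t) M)) in
  let Dstar := fun t : R =>
             padd M (pscal (cos theta) (rot_cw theta (psub (Delta_u a b c u t) M))) in
  (forall t : R, (forall k : Z, t <> u + 2 * IZR k * PI) ->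
     (forall X : pt, F t X = 0 <-> Lstar a b u theta t X) /\
     is_envelope_point F t (Dstar t) /\
     (forall X : pt, is_envelope_point F t X -> X = Dstar t)) /\
  (forall t : R, Dstar t = rot_cw_about theta M
                     (padd M (pscal (cos theta) (psub (Delta_u a b c u t) M)))) /\
  Rabs (signed_area Dstar 0 (2 * PI)) = PI * c ^ 4 * (cos theta) ^ 2 / (2 * a * b).
Proof.
  intros Hb Hba Hc Hc2 Hth M F Dstar.
  assert (Ha0 : a <> 0) by lra. assert (Hb0 : b <> 0) by lra.
  assert (Hsc : forall x, sin x ^ 2 + cos x ^ 2 = 1) by (intro x; pose proof (sin2_cos2 x) as Hx; unfold Rsqr in Hx; lra).
  assert (Hh := Hsc theta).
  assert (HD : forall t, Dstar t = (DSX a b (cos t) (sin t) (cos u) (sin u) (cos theta) (sin theta),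
                                   DSY a b (cos t) (sin t) (cos u) (sin u) (cos theta) (sin theta))).
  { intro t. unfold Dstar, M, Delta_u, Pe, padd, pscal, rot_cw, psub, DSX, DSY; cbn [fst snd].
    rewrite Hc2, cos_plus, sin_plus. f_equal; field; auto. }
  split; [|split].
  - intros t Hk.
    assert (HdF : forall X, is_derive (fun s => F s X) t
       (dFe a b (cos t) (sin t) (cos u) (sin u) (cos theta) (sin theta) (fst X) (snd X))).
    { intro X. unfold F, M, pdot, psub, Pe, rot_cw, dFe; cbn [fst snd].
      auto_derive; [trivial | ring]. }
    assert (HF0 : F t (Dstar t) = 0).
    { unfold F; rewrite HD; unfold M, Pe. apply LF; auto. }
    assert (HdF0 : dFe a b (cos t) (sin t) (cos u) (sin u) (cos theta) (sin theta)
                   (fst (Dstar t)) (snd (Dstar t)) = 0).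
    { rewrite HD; cbn [fst snd]. apply LdF; auto. }
    split; [|split].
    + intro X; destruct X as [x1 x2]; split.
      * intro HF.
        exists (a*cos t + (x1 - a*cos t)*cos theta - (x2 - b*sin t)*sin theta,
                b*sin t + (x1 - a*cos t)*sin theta + (x2 - b*sin t)*cos theta).
        split.
        -- unfold F, M, pdot, psub, Pe, rot_cw in HF; cbn [fst snd] in HF.
           unfold Lline, pdot, psub, Pe; cbn [fst snd]. rewrite <- HF; ring.
        -- unfold rot_cw_about, padd, psub, rot_cw, Pe; cbn [fst snd]. f_equal.
           ++ match goal with |- _ = ?R => replace R with
                (a*cos t + (x1 - a*cos t)*(sin theta^2+cos theta^2)) by ring end.
              rewrite Hh; ring.
           ++ match goal with |- _ = ?R => replace R with
                (b*sin t + (x2 - b*sin t)*(sin theta^2+cos theta^2)) by ring end.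
              rewrite Hh; ring.
      * intros [Y [HL HX]]. rewrite HX. unfold Lline in HL.
        transitivity ((sin theta^2+cos theta^2) * pdot (psub Y (Pe a b t)) (psub (Pe a b t) (Pe a b u))).
        -- unfold F, M, rot_cw_about, padd, pdot, psub, rot_cw, Pe; cbn [fst snd]. ring.
        -- rewrite HL; ring.
    + split; [exact HF0|]. rewrite <- HdF0. apply HdF.
    + intros [x1 x2] [H1 H2].
      pose proof (is_derive_unique _ _ _ H2) as U1.
      pose proof (is_derive_unique _ _ _ (HdF (x1,x2))) as U2.
      rewrite U1 in U2. cbn [fst snd] in U2. symmetry in U2.
      rewrite dFe_lin in U2, HdF0.
      unfold F, M, pdot, psub, Pe, rot_cw in H1, HF0. cbn [fst snd] in H1, HF0.
      destruct (Dstar t) as [d1 d2]. cbn [fst snd] in HF0, HdF0.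
      assert (Hdet : ((a*cos t - a*cos u)*cos theta + (b*sin t - b*sin u)*sin theta) *
                       (- (- a * sin t) * sin theta + (b*cos t) * cos theta)
                   - (- (a*cos t - a*cos u)*sin theta + (b*sin t - b*sin u)*cos theta) *
                       ((- a * sin t) * cos theta + (b*cos t) * sin theta) <> 0).
      { replace (((a*cos t - a*cos u)*cos theta + (b*sin t - b*sin u)*sin theta) *
                       (- (- a * sin t) * sin theta + (b*cos t) * cos theta)
                   - (- (a*cos t - a*cos u)*sin theta + (b*sin t - b*sin u)*cos theta) *
                       ((- a * sin t) * cos theta + (b*cos t) * sin theta))
          with ((sin theta^2+cos theta^2) * (a*b) * ((sin t^2 + cos t^2) - (cos t * cos u + sin t * sin u))) by ring.
        rewrite Hh, Hsc, <- cos_minus.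
        intro E. assert (Ec : cos (t - u) = 1).
        { assert (a*b <> 0) by (apply Rmult_integral_contrapositive; auto). nra. }
        destruct (cos_eq1 _ Ec) as [k Hk']. apply (Hk k). lra. }
      destruct (lin2 _ _ _ _ _ _ _ _ _ _ _ Hdet H1 HF0 U2 HdF0) as [-> ->]. reflexivity.
  - intro t. unfold Dstar, rot_cw_about, padd, pscal, psub, rot_cw; simpl. f_equal; ring.
  - assert (HdX : forall t, Derive (fun s => fst (Dstar s)) t =
        DSXd a b (cos t) (sin t) (cos u) (sin u) (cos theta) (sin theta)).
    { intro t. apply is_derive_unique.
      apply (is_derive_ext (fun s => DSX a b (cos s) (sin s) (cos u) (sin u) (cos theta) (sin theta))).
      { intro s; rewrite HD; reflexivity. }
      unfold DSX, DSXd. auto_derive; [trivial | field; auto]. }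
    assert (HdY : forall t, Derive (fun s => snd (Dstar s)) t =
        DSYd a b (cos t) (sin t) (cos u) (sin u) (cos theta) (sin theta)).
    { intro t. apply is_derive_unique.
      apply (is_derive_ext (fun s => DSY a b (cos s) (sin s) (cos u) (sin u) (cos theta) (sin theta))).
      { intro s; rewrite HD; reflexivity. }
      unfold DSY, DSYd. auto_derive; [trivial | field; auto]. }
    unfold signed_area.
    rewrite (RInt_ext _ (fun t => Kc a b (cos t) (sin t) (cos u) (sin u) (cos theta) (sin theta)
                + Gd a b (cos t) (sin t) (cos u) (sin u) (cos theta) (sin theta))).
    2: { intros x _. rewrite HdX, HdY, HD. cbn [fst snd]. apply LI; auto. }
    pose (G := fun t => Kc a b 1 0 (cos u) (sin u) (cos theta) (sin theta) * t
                 + Gp a b (cos t) (sin t) (cos u) (sin u) (cos theta) (sin theta)).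
    assert (HR : is_RInt (fun t => Kc a b (cos t) (sin t) (cos u) (sin u) (cos theta) (sin theta)
                + Gd a b (cos t) (sin t) (cos u) (sin u) (cos theta) (sin theta)) 0 (2*PI)
        (minus (G (2*PI)) (G 0))).
    { apply (is_RInt_derive G).
      - intros x _. unfold G, Kc, Gp, Gd. auto_derive; [trivial | field; auto].
      - intros x _. apply (@ex_derive_continuous R_AbsRing R_NormedModule). unfold Kc, Gd. auto_derive. trivial. }
    rewrite (is_RInt_unique _ _ _ _ HR).
    unfold minus, plus, opp, G; cbn.
    rewrite cos_2PI, sin_2PI, cos_0, sin_0.
    rewrite LK by auto.
    assert (Hc4 : c*(c*(c*(c*1))) = (a^2-b^2)^2) by (rewrite <- Hc2; ring). rewrite Hc4.
    match goal with |- Rabs ?E = ?R => replace E with (-R) by (field; auto) end.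
    rewrite Rabs_Ropp. apply Rabs_right.
    apply Rle_ge. unfold Rdiv. apply Rmult_le_pos.
    + pose proof PI_RGT_0. apply Rmult_le_pos; [apply Rmult_le_pos; [lra| apply pow2_ge_0]| nra].
    + left. apply Rinv_0_lt_compat. nra.
Qed.
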